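(* Let $G=([n],E)$ be a connected simple graph with $n\ge2$, vertex degrees $d_i$, and $\mathsf{B}_G=\{d_j^{-1/2}E_{i,j},\ d_i^{-1/2}E_{j,i} : \{i,j\}\in E\}$. Then (1) $G$ has an independent set of size $s$ if and only if $\mathsf{B}_G$ has an isotropic space of dimension $s$; (2) $G$ has a vertex $c$-coloring (partition of $[n]$ into $c$ independent sets) if and only if $\mathsf{B}_G$ has an isotropic $c$-decomposition.
   Context: $E_{i,j}$ is the matrix with $(i,j)$ entry $1$ and others $0$. For a finite set $\mathsf{B}\subseteq\mathrm{M}(n,\mathbb{C})$, an isotropic space is a subspace $U\le\mathbb{C}^n$ with $u^\dagger Bu'=0$ for all $u,u'\in U$ and all $B\in\mathsf{B}$ ($\dagger$ = conjugate transpose). An isotropic $c$-decomposition of $\mathsf{B}$ is an orthogonal (w.r.t. the standard Hermitian inner product) direct sum decomposition $\mathbb{C}^n=U_1\oplus\cdots\oplus U_c$ into $c$ nonzero isotropic spaces of $\mathsf{B}$. *)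

(* Defs.v *)
From HB Require Import structures.
From mathcomp Require Import all_boot all_order all_algebra.
Set Implicit Arguments. Unset Strict Implicit. Unset Printing Implicit Defensive.
Import Order.TTheory GRing.Theory Num.Theory.
Local Open Scope ring_scope.

Definition herm_form (R : numClosedFieldType) (n : nat) (u : 'rV[R]_n) (B : 'M[R]_n)
  (v : 'rV[R]_n) : R :=
  ((map_mx Num.conj u) *m B *m v^T) 0 0.

Definition herm_ip (R : numClosedFieldType) (n : nat) (u v : 'rV[R]_n) : R :=
  ((map_mx Num.conj u) *m v^T) 0 0.

(* A subspace of R^n is represented by a matrix through its row space (%MS).
   U is isotropic for the (possibly infinite-described, here predicate-given)
   set of matrices Bs. *)
Definition isotropic (R : numClosedFieldType) (n : nat) (Bs : 'M[R]_n -> Prop)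
  (U : 'M[R]_n) : Prop :=
  forall u v : 'rV[R]_n, (u <= U)%MS -> (v <= U)%MS ->
    forall B, Bs B -> herm_form u B v = 0.

Definition isotropic_decomposition (R : numClosedFieldType) (n : nat)
  (Bs : 'M[R]_n -> Prop) (c : nat) : Prop :=
  exists U : 'I_c -> 'M[R]_n,
    [/\ forall k, (0 < \rank (U k))%N,
        forall k, isotropic Bs (U k),
        forall k l, k != l -> forall u v : 'rV[R]_n,
            (u <= U k)%MS -> (v <= U l)%MS -> herm_ip u v = 0
      & (1%:M <= \sum_(k < c) U k)%MS].

Definition deg (n : nat) (e : rel 'I_n) (i : 'I_n) : nat := #|[set j | e i j]|.

Definition BG (R : numClosedFieldType) (n : nat) (e : rel 'I_n) (B : 'M[R]_n) : Prop :=
  exists i j : 'I_n, e i j /\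
    (B = (sqrtC ((deg e j)%:R))^-1 *: delta_mx i j \/
     B = (sqrtC ((deg e i)%:R))^-1 *: delta_mx j i).

Definition independent (n : nat) (e : rel 'I_n) (S : {set 'I_n}) : Prop :=
  forall i j, i \in S -> j \in S -> ~~ e i j.

(* Main.v *)
Require Import Defs.
From HB Require Import structures.
From mathcomp Require Import all_boot all_order all_algebra.
Import Order.TTheory GRing.Theory Num.Theory.
Local Open Scope ring_scope.
Set Implicit Arguments. Unset Strict Implicit. Unset Printing Implicit Defensive.

Section S.
Variable R : numClosedFieldType.
Variable n : nat.
Implicit Types U : 'M[R]_n.

Lemma herm_form_delta (u v : 'rV[R]_n) a (i j : 'I_n) :
  herm_form u (a *: delta_mx i j) v = a * ((u 0 i)^* * v 0 j).
Proof.
rewrite /herm_form mxE (bigD1 j) //= big1 => [|k kj]; last first.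
  rewrite !mxE big1 ?mul0r // => l _; rewrite !mxE (negbTE kj) andbF mulr0 mulr0 //.
rewrite addr0 !mxE (bigD1 i) //= big1 => [|l li]; last first.
  rewrite !mxE; case: eqP => [E|_]; last by rewrite /= mulr0 mulr0.
  by rewrite E eqxx in li.
by rewrite addr0 !mxE !eqxx /= mulr1 [_ * a]mulrC mulrA.
Qed.

Lemma herm_ipE (u v : 'rV[R]_n) :
  herm_ip u v = \sum_k (u 0 k)^* * v 0 k.
Proof. by rewrite /herm_ip mxE; apply: eq_bigr => k _; rewrite !mxE. Qed.

Definition supp m (U : 'M[R]_(m, n)) : {set 'I_n} := [set i | col i U != 0].
Arguments supp {m} U.

Lemma entry_zero m (U : 'M[R]_(m, n)) (u : 'rV_n) i :
  (u <= U)%MS -> col i U = 0 -> u 0 i = 0.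
Proof.
move=> /submxP [w ->] H; rewrite mxE big1 // => k _.
by have := congr1 (fun M : 'M[R]_(m,1) => M k 0) H; rewrite !mxE => ->; rewrite mulr0.
Qed.

Lemma supp_entry m (U : 'M[R]_(m, n)) i : i \in supp U -> exists r, U r i != 0.
Proof.
rewrite inE => H; apply/existsP; apply: contraR H => /existsPn H.
by apply/eqP/matrixP => r c; rewrite !mxE; apply/eqP/negbNE/H.
Qed.

Lemma iso_supp_indep (e : rel 'I_n) (e_sym : symmetric e) U :
  isotropic (@BG R n e) U -> independent e (supp U).
Proof.
move=> iso i j Hi Hj; apply/negP => eij.
have [r Hr] := supp_entry Hi; have [r' Hr'] := supp_entry Hj.
have := iso (row r U) (row r' U) (row_sub _ _) (row_sub _ _) _
   (ex_intro _ i (ex_intro _ j (conj eij (or_introl erefl)))).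
rewrite herm_form_delta !mxE; apply/eqP.
rewrite !mulf_neq0 // ?conjC_eq0 // invr_eq0 sqrtC_eq0 pnatr_eq0 -lt0n.
by apply/card_gt0P; exists i; rewrite inE e_sym.
Qed.

Lemma indep_iso (e : rel 'I_n) (e_sym : symmetric e) S U :
  independent e S ->
  (forall u : 'rV[R]_n, (u <= U)%MS -> forall i, i \notin S -> u 0 i = 0) ->
  isotropic (@BG R n e) U.
Proof.
move=> ind H u v Hu Hv B [i [j [eij [->|->]]]]; rewrite herm_form_delta.
- case: (boolP (i \in S)) => iS; last by rewrite (H u Hu i iS) conjC0 mul0r mulr0.
  case: (boolP (j \in S)) => jS; last by rewrite (H v Hv j jS) mulr0 mulr0.
  by have := ind i j iS jS; rewrite eij.
- case: (boolP (j \in S)) => jS; last by rewrite (H u Hu j jS) conjC0 mul0r mulr0.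
  case: (boolP (i \in S)) => iS; last by rewrite (H v Hv i iS) mulr0 mulr0.
  by have := ind i j iS jS; rewrite eij.
Qed.

Definition Amx (S : {set 'I_n}) : 'M[R]_(#|S|, n) :=
  \matrix_(k, j) (enum_val k == j)%:R.

Lemma Amx_out (S : {set 'I_n}) (u : 'rV[R]_n) (i : 'I_n) : (u <= Amx S)%MS -> i \notin S -> u 0 i = 0.
Proof.
move=> /submxP [w ->] iS; rewrite mxE big1 // => k _; rewrite !mxE.
case: eqP => [E|]; last by rewrite mulr0.
by have := enum_valP k; rewrite E (negbTE iS).
Qed.

Lemma Amx_in (S : {set 'I_n}) (i : 'I_n) : i \in S -> ((delta_mx 0 i : 'rV[R]_n) <= Amx S)%MS.
Proof.
move=> iS; have -> : delta_mx 0 i = row (enum_rank_in iS i) (Amx S).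
  by apply/matrixP => a b; rewrite !mxE enum_rankK_in // (ord1 a) eqxx /= eq_sym.
exact: row_sub.
Qed.

Lemma Amx_rank (S : {set 'I_n}) : \rank (Amx S) = #|S|.
Proof.
apply/eqP; rewrite eqn_leq rank_leq_row /=.
have := mxrankM_maxl (Amx S) (Amx S)^T.
suff -> : Amx S *m (Amx S)^T = 1%:M by rewrite mxrank1.
apply/matrixP => k l; rewrite !mxE (bigD1 (enum_val k)) //= big1 => [|j jk]; last first.
  rewrite !mxE; case: eqP => [E|]; last by rewrite mul0r.
  by rewrite E eqxx in jk.
rewrite !mxE eqxx mul1r addr0 (inj_eq enum_val_inj) eq_sym //.
Qed.

Lemma sub_Amx_supp m (U : 'M[R]_(m, n)) : (U <= Amx (supp U))%MS.
Proof.
apply/row_subP => r; rewrite (row_sum_delta (row r U)); apply: summx_sub => i _.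
case: (boolP (i \in supp U)) => Hi; first by apply: scalemx_sub; apply: Amx_in.
move: Hi; rewrite inE negbK => /eqP H.
have -> : row r U 0 i = 0 by rewrite mxE; have := congr1 (fun M : 'M[R]_(m,1) => M r 0) H; rewrite !mxE.
by rewrite scale0r sub0mx.
Qed.


Lemma gram_bound c (U : 'I_c -> 'M[R]_n) :
  (forall k, (0 < \rank (U k))%N) ->
  (forall k l, k != l -> forall u v : 'rV[R]_n,
            (u <= U k)%MS -> (v <= U l)%MS -> herm_ip u v = 0) ->
  (c <= n)%N.
Proof.
move=> Hrk Horth.
have Hx k : exists r, row r (U k) != 0.
  apply/existsP; apply: contraLR (Hrk k) => /existsPn H.
  rewrite -leqNgt leqn0 mxrank_eq0; apply/eqP/row_matrixP => r.
  by rewrite row0; apply/eqP/negbNE/H.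
have [r Hr] := fin_all_exists Hx.
pose X : 'M[R]_(c, n) := \matrix_(k, j) row (r k) (U k) 0 j.
have HX k : row k X = row (r k) (U k) by apply/rowP => j; rewrite !mxE.
have HG : X *m (map_mx Num.conj X)^T = diag_mx (\row_k herm_ip (row k X) (row k X)).
  apply/matrixP => k l; rewrite !mxE.
  have -> : \sum_j X k j * (map_mx Num.conj X)^T j l = herm_ip (row l X) (row k X).
    by rewrite herm_ipE; apply: eq_bigr => j _; rewrite !mxE mulrC.
  case: eqP => [->|/eqP kl]; first by rewrite mulr1n.
  rewrite mulr0n (Horth l k) // ?HX ?row_sub //; by rewrite eq_sym.
have : \rank (X *m (map_mx Num.conj X)^T) = c.
  apply: mxrank_unit; rewrite HG unitmxE det_diag unitfE.
  apply/prodf_neq0 => k _; rewrite mxE herm_ipE.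
  apply/negP => /eqP H0; move: (Hr k); rewrite -HX => /negP; apply.
  apply/eqP/rowP => j; rewrite [RHS]mxE.
  have Hnn : forall i : 'I_n, true -> 0 <= (row k X 0 i)^* * row k X 0 i.
    by move=> i _; rewrite -normCKC exprn_ge0.
  have := @psumr_eq0P _ _ _ _ Hnn H0 j isT.
  by rewrite -normCKC => /eqP; rewrite sqrf_eq0 normr_eq0 => /eqP.
move=> <-; apply: leq_trans (mxrankM_maxl _ _) (rank_leq_col _).
Qed.

End S.

Lemma subset_card (T : finType) (A : {set T}) s :
  (s <= #|A|)%N -> exists S : {set T}, S \subset A /\ #|S| = s.
Proof.
elim: s => [|s IH] Hs; first by exists set0; rewrite sub0set cards0.
have [S [SA cS]] := IH (ltnW Hs).
have /subsetPn [x xA xS] : ~~ (A \subset S).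
  by apply: contraTN Hs => /subset_leq_card; rewrite cS -ltnNge ltnS.
exists (x |: S); split; first by rewrite subUset sub1set xA SA.
by rewrite cardsU1 xS cS.
Qed.

Section Col.
Variables (n c : nat) (e : rel 'I_n).
Hypothesis e_irr : irreflexive e.

Definition good (f : 'I_n -> 'I_c) := forall i j, e i j -> f i != f j.

Lemma full_surj (f : 'I_n -> 'I_c) : (c <= #|[set f i | i in 'I_n]|)%N ->
  forall k, exists i, f i = k.
Proof.
move=> H k.
have /eqP E : [set f i | i in 'I_n] == setT.
  by rewrite eqEcard subsetT cardsT card_ord.
have : k \in [set f i | i in 'I_n] by rewrite E inE.
by case/imsetP => i _ ->; exists i.
Qed.

Lemma surj_refine (f : 'I_n -> 'I_c) : (c <= n)%N -> good f ->
  exists g : 'I_n -> 'I_c, good g /\ forall k, exists i, g i = k.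
Proof.
move=> cn.
suff H : forall m (f : 'I_n -> 'I_c),
    (c - #|[set f i | i in 'I_n]| <= m)%N -> good f ->
    exists g : 'I_n -> 'I_c, good g /\ forall k, exists i, g i = k.
  by apply: H (leqnn _).
elim=> [|m IH] {}f Hm gf.
  by exists f; split => //; apply: full_surj; rewrite -subn_eq0 -leqn0.
case: (leqP c #|[set f i | i in 'I_n]|) => Hc.
  by exists f; split => //; apply: full_surj.
have /subsetPn [k _ kf] : ~~ ([set: 'I_c] \subset [set f i | i in 'I_n]).
  by apply: contraTN Hc => /subset_leq_card; rewrite cardsT card_ord -leqNgt.
have /injectivePn [i [j ij fij]] : ~~ injectiveb f.
  apply: contraTN Hc => /injectiveP finj.
  by rewrite -leqNgt (card_imset _ finj) card_ord.
pose g x := if x == i then k else f x.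
have fimg x : f x \in [set f i | i in 'I_n] by apply: imset_f.
have gg : good g.
  move=> x y exy; rewrite /g.
  case: (x =P i) => [xi|_]; case: (y =P i) => [yi|_].
  - by subst; rewrite e_irr in exy.
  - by apply: contraNN kf => /eqP ->.
  - by apply: contraNN kf => /eqP <-.
  - exact: gf.
apply: IH gg.
have -> : [set g x | x in 'I_n] = k |: [set f i | i in 'I_n].
  apply/setP => z; rewrite in_setU1; apply/imsetP/orP.
  - by case=> x _ ->; rewrite /g; case: (x =P i) => _; [left | right; apply: fimg].
  - case=> [/eqP ->|/imsetP [x _ ->]]; first by exists i; rewrite // /g eqxx.
    case: (x =P i) => [xi|/eqP xi].
      exists j => //; rewrite /g; case: eqP => [ji|_]; last by rewrite xi.
      by rewrite ji eqxx in ij.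
    by exists x => //; rewrite /g (negbTE xi).
rewrite cardsU1 kf add1n subnS.
by move: Hm; case: (c - _)%N.
Qed.

Lemma coloring_partition (g : 'I_n -> 'I_c) : good g -> (forall k, exists i, g i = k) ->
  exists P : {set {set 'I_n}},
    [/\ partition P [set: 'I_n], #|P| = c & forall S, S \in P -> independent e S].
Proof.
move=> gg gs.
pose F k := [set i | g i == k].
have Fne k : F k != set0.
  by have [i <-] := gs k; apply/set0Pn; exists i; rewrite inE.
have [tri inj] := @trivIimset _ _ (mem [set: 'I_c]) F
  (fun k l _ _ lk => ltac:(rewrite disjoints_subset; apply/subsetP => x;
                          by rewrite !inE => /eqP ->; rewrite eq_sym))
  (ltac:(apply/imsetP => [[k _ /eqP]]; by rewrite eq_sym (negbTE (Fne k)))).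
exists [set F k | k in [set: 'I_c]]; split.
- apply/and3P; split => //.
    apply/eqP/setP => x; rewrite cover_imset inE; apply/bigcupP.
    by exists (g x); rewrite ?inE.
  by apply/imsetP => [[k _ /eqP]]; rewrite eq_sym (negbTE (Fne k)).
- by rewrite (card_in_imset inj) cardsT card_ord.
- move=> S /imsetP [k _ ->] x y; rewrite !inE => /eqP gx /eqP gy.
  by apply/negP => /gg; rewrite gx gy eqxx.
Qed.

End Col.

Unset Implicit Arguments.
Set Strict Implicit.

Theorem proposition11p2 (R : numClosedFieldType) (n : nat) (e : rel 'I_n)
  (e_sym : symmetric e) (e_irr : irreflexive e)
  (e_conn : forall i j : 'I_n, connect e i j) (n_ge2 : (2 <= n)%N) :
  (forall s : nat,
     (exists S : {set 'I_n}, #|S| = s /\ independent e S) <->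
     (exists U : 'M[R]_n, \rank U = s /\ isotropic (@BG R n e) U)) /\
  (forall c : nat,
     (exists P : {set {set 'I_n}},
        [/\ partition P [set: 'I_n], #|P| = c & forall S, S \in P -> independent e S]) <->
     isotropic_decomposition (@BG R n e) c).
Proof.
split=> [s|c]; split.
- case=> S [<- indS]; exists <<Amx R S>>%MS; split; first by rewrite mxrank_gen Amx_rank.
  apply: (indep_iso e_sym indS) => u; rewrite genmxE => Hu i; exact: Amx_out.
- case=> U [<- isoU].
  have := mxrankS (sub_Amx_supp U); rewrite Amx_rank => Hle.
  have [S [SU <-]] := subset_card Hle; exists S; split => //.
  move=> i j iS jS; exact: (iso_supp_indep e_sym isoU) (subsetP SU i iS) (subsetP SU j jS).
- case=> P [/and3P [/eqP Hcov Htriv Hnot0] <- Hind].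
  pose Sk (k : 'I_#|P|) : {set 'I_n} := enum_val k.
  have SkP k : Sk k \in P by apply: enum_valP.
  exists (fun k => <<Amx R (Sk k)>>%MS); split.
  + move=> k; rewrite mxrank_gen Amx_rank card_gt0.
    by apply: contraNneq Hnot0 => <-; apply: SkP.
  + move=> k; apply: (indep_iso e_sym (Hind _ (SkP k))) => u.
    rewrite genmxE => Hu i; exact: Amx_out.
  + move=> k l kl u v; rewrite !genmxE => Hu Hv.
    have Hd : [disjoint Sk k & Sk l].
      apply: (trivIsetP Htriv) => //; apply: contra kl => /eqP.
      by move/enum_val_inj => ->.
    rewrite herm_ipE big1 // => j _.
    case: (boolP (j \in Sk k)) => jk; last by rewrite (Amx_out Hu jk) conjC0 mul0r.
    by rewrite (Amx_out Hv (negbT (disjointFr Hd jk))) mulr0.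
  + apply/row_subP => i; rewrite row1.
    have : i \in cover P by rewrite Hcov inE.
    case/bigcupP => S SP iS.
    apply: (sumsmx_sup (enum_rank_in SP S)) => //.
    rewrite genmxE /Sk enum_rankK_in //; exact: Amx_in.
- case=> U [Hrk Hiso Horth Hsum].
  have cn := gram_bound Hrk Horth.
  have Hex i : exists k, i \in supp (U k).
    apply/existsP; apply: contraT => /existsPn H.
    have : ((delta_mx 0 i : 'rV[R]_n) <= \sum_k U k)%MS.
      by apply: submx_trans Hsum; rewrite -row1 row_sub.
    case/sub_sumsmxP => w Hw.
    have := congr1 (fun M : 'rV[R]_n => M 0 i) Hw.
    rewrite !mxE !eqxx summxE big1 => [/eqP|k _]; first by rewrite oner_eq0.
    apply: (entry_zero (submxMl _ _)).
    by move: (H k); rewrite inE negbK => /eqP.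
  have [f Hf] := fin_all_exists Hex.
  have gf : good e f.
    move=> i j eij; apply/negP => /eqP fij.
    have := iso_supp_indep e_sym (Hiso (f i)) (Hf i).
    by rewrite fij => /(_ j (Hf j)); rewrite eij.
  have [g [gg gs]] := surj_refine e_irr cn gf.
  exact: coloring_partition gg gs.
Qed.
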